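(* There exists an $\mathrm{RDGDD}(3,4,10\{2\})$.
   Context: A $\mathrm{GDD}(3,4,mv)$ of type $m^v$ is $(X,\mathcal{G},\mathcal{A})$ with $|X|=mv$, $\mathcal{G}$ a partition of $X$ into $v$ groups of size $m$, and $\mathcal{A}$ a set of $4$-subsets of $X$, each meeting every group in at most one point, such that every $3$-subset of $X$ with points in three distinct groups lies in exactly one block. For $x\in G\in\mathcal{G}$, the derived design $(X\setminus G,\mathcal{G}\setminus\{G\},\{A\setminus\{x\}:x\in A\in\mathcal{A}\})$ is a $\mathrm{GDD}(2,3,m(v-1))$ of type $m^{v-1}$ (each pair from distinct groups in exactly one triple). An $\mathrm{RDGDD}(3,4,v\{m\})$ is a $\mathrm{GDD}(3,4,mv)$ of type $m^v$ whose derived design at every point is resolvable, i.e., its blocks can be partitioned into parallel classes (sets of pairwise disjoint blocks covering $X\setminus G$). *)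

(* Defs.v *)
From mathcomp Require Import all_boot.
Set Implicit Arguments. Unset Strict Implicit. Unset Printing Implicit Defensive.

Section Designs.
Variable T : finType.

Definition GDD_3_4 (m v : nat) (G A : {set {set T}}) : Prop :=
  #|T| = m * v /\
  partition G [set: T] /\
  #|G| = v /\
  (forall g, g \in G -> #|g| = m) /\
  (forall B, B \in A -> #|B| = 4 /\ forall g, g \in G -> #|B :&: g| <= 1) /\
  (forall S : {set T}, #|S| = 3 -> (forall g, g \in G -> #|S :&: g| <= 1) ->
         exists! B, B \in A /\ S \subset B).

Definition derived_blocks (A : {set {set T}}) (x : T) : {set {set T}} :=
  [set B :\ x | B in A & x \in B].

Definition derived_points (G : {set {set T}}) (x : T) : {set T} :=
  [set: T] :\: pblock G x.

Definition parallel_class (Y : {set T}) (C : {set {set T}}) : Prop :=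
  trivIset C /\ cover C = Y.

Definition resolvable (Y : {set T}) (D : {set {set T}}) : Prop :=
  exists P : {set {set {set T}}},
    partition P D /\ forall C, C \in P -> parallel_class Y C.

Definition RDGDD_3_4 (m v : nat) (G A : {set {set T}}) : Prop :=
  GDD_3_4 m v G A /\
  forall x : T, resolvable (derived_points G x) (derived_blocks A x).

End Designs.

(* Main.v *)
Require Import Defs.
From mathcomp Require Import all_boot.
Set Implicit Arguments. Unset Strict Implicit. Unset Printing Implicit Defensive.

Notation T := 'I_20.

Definition gid (i : T) : nat := i %% 10.
Definition mkT (n : nat) : T := @Ordinal 20 (n %% 20) (ltn_pmod n (isT : 0 < 20)).
Definition sh (t i : nat) : T := mkT (i + t).
Definition ord20 : seq T := map mkT (iota 0 20).

Definition base : seq (seq nat) :=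
 [:: [:: 0; 1; 2; 16]; [:: 0; 1; 7; 8]; [:: 0; 1; 3; 4]; [:: 0; 1; 5; 9];
     [:: 0; 1; 6; 12]; [:: 0; 2; 6; 11]; [:: 0; 2; 4; 17]; [:: 0; 2; 7; 14];
     [:: 0; 2; 5; 8]; [:: 0; 3; 9; 12]; [:: 0; 3; 8; 16]; [:: 0; 2; 9; 13]].

Definition res0 : seq (seq (seq nat)) :=
 [:: [:: [:: 1; 2; 16]; [:: 3; 5; 7]; [:: 4; 9; 18]; [:: 6; 14; 15]; [:: 8; 11; 17]; [:: 12; 13; 19]];
     [:: [:: 1; 3; 4]; [:: 2; 5; 8]; [:: 6; 7; 19]; [:: 9; 11; 15]; [:: 12; 14; 17]; [:: 13; 16; 18]];
     [:: [:: 1; 5; 9]; [:: 2; 7; 14]; [:: 3; 6; 18]; [:: 4; 11; 13]; [:: 8; 12; 15]; [:: 16; 17; 19]];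
     [:: [:: 1; 6; 12]; [:: 2; 3; 19]; [:: 4; 15; 16]; [:: 5; 13; 17]; [:: 7; 11; 18]; [:: 8; 9; 14]];
     [:: [:: 1; 7; 8]; [:: 2; 9; 13]; [:: 3; 15; 17]; [:: 4; 5; 6]; [:: 11; 12; 16]; [:: 14; 18; 19]];
     [:: [:: 1; 13; 14]; [:: 2; 15; 18]; [:: 3; 8; 16]; [:: 4; 7; 12]; [:: 5; 11; 19]; [:: 6; 9; 17]];
     [:: [:: 1; 15; 19]; [:: 2; 4; 17]; [:: 3; 11; 14]; [:: 5; 12; 18]; [:: 6; 8; 13]; [:: 7; 9; 16]];
     [:: [:: 1; 17; 18]; [:: 2; 6; 11]; [:: 3; 9; 12]; [:: 4; 8; 19]; [:: 5; 14; 16]; [:: 7; 13; 15]]].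

Definition blocks : seq (seq T) :=
  [seq [seq sh t i | i <- b] | b <- base, t <- iota 0 20].

Definition cls (x : T) : seq (seq (seq T)) :=
  [seq [seq [seq sh (val x) i | i <- tr] | tr <- c] | c <- res0].

Definition seteq (s1 s2 : seq T) := all (mem s2) s1 && all (mem s1) s2.

Definition chk_blocks :=
  all (fun b => uniq b && (size b == 4) &&
     all (fun k => count (fun i => gid i == k) b <= 1) (iota 0 10)) blocks.

Definition chk_triples :=
  all (fun a => all (fun b => all (fun c =>
    [&& gid a != gid b, gid a != gid c & gid b != gid c] ==>
    (count (fun bl => [&& a \in bl, b \in bl & c \in bl]) blocks == 1))
    ord20) ord20) ord20.

Definition chk_res :=
  all (fun x =>
    all (fun c => (c != [::]) && all (fun t => has (fun b => (x \in b) &&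
          seteq t (filter (predC1 x) b)) blocks) c) (cls x) &&
    all (fun b => (x \in b) ==> has (fun t => seteq t (filter (predC1 x) b))
          (flatten (cls x))) blocks &&
    all (fun c1 => all (fun c2 => all (fun t1 => all (fun t2 =>
          seteq t1 t2 ==> (c1 == c2)) c2) c1) (cls x)) (cls x) &&
    all (fun c : seq (seq T) => all (fun t1 : seq T => all (fun t2 : seq T => (t1 == t2) || ~~ has (mem t2) t1) c) c &&
          all (fun y => has (fun t => y \in t) c == (gid y != gid x)) ord20) (cls x))
  ord20.

Lemma chk_blocks_ok : chk_blocks. Proof. vm_compute. reflexivity. Qed.
Lemma chk_triples_ok : chk_triples. Proof. vm_compute. reflexivity. Qed.
Lemma chk_res_ok : chk_res. Proof. vm_compute. reflexivity. Qed.

Lemma forall20 (P : pred T) : all P ord20 -> forall x, P x.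
Proof.
move=> /allP H x.
have -> : x = mkT (val x) by apply: val_inj; rewrite /= modn_small.
by apply: H; apply: map_f; rewrite mem_iota /=.
Qed.

Definition mkset (s : seq T) : {set T} := [set x in s].
Lemma in_mkset s y : (y \in mkset s) = (y \in s).
Proof. by rewrite inE. Qed.

Lemma seteqP s1 s2 : reflect (s1 =i s2) (seteq s1 s2).
Proof.
apply: (iffP andP) => [[/allP h1 /allP h2] y|h].
  by apply/idP/idP => [/h1|/h2].
by split; apply/allP => y; rewrite /= h.
Qed.

Lemma mkset_eq s1 s2 : mkset s1 = mkset s2 -> s1 =i s2.
Proof. by move=> e y; rewrite -!in_mkset e. Qed.

Lemma count1_uniq (U : eqType) (p : pred U) s x y :
  count p s = 1 -> x \in s -> p x -> y \in s -> p y -> x = y.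
Proof.
rewrite -size_filter => hs xs px ys py.
have : x \in filter p s by rewrite mem_filter px xs.
have : y \in filter p s by rewrite mem_filter py ys.
case: (filter p s) hs => [|z [|]] //= _.
by rewrite !inE => /eqP -> /eqP ->.
Qed.

Lemma two_in (S : {set T}) a b : a != b -> a \in S -> b \in S -> 1 < #|S|.
Proof.
move=> ab aS bS.
apply: leq_trans (subset_leq_card (_ : [set a; b] \subset S)).
  by rewrite cards2 ab.
by apply/subsetP => y; rewrite !inE => /orP[] /eqP ->.
Qed.

Definition Gs : {set {set T}} := [set [set i : T | gid i == k] | k : 'I_10].
Definition As : {set {set T}} := [set B in map mkset blocks].

Lemma grp_in (x : T) : [set i : T | gid i == gid x] \in Gs.
Proof.
apply/imsetP; exists (Ordinal (ltn_pmod x (isT : 0 < 10))) => //.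
Qed.

Lemma Gs_triv : trivIset Gs.
Proof.
apply/trivIsetP => A B /imsetP[k1 _ ->] /imsetP[k2 _ ->] neq.
rewrite -setI_eq0; apply/eqP/setP => y; rewrite !inE.
apply/negbTE/negP => /andP[/eqP h1 /eqP h2].
have e : k1 = k2 by apply: val_inj; rewrite /= -h1 -h2.
by rewrite e eqxx in neq.
Qed.

Lemma pblock_Gs x : pblock Gs x = [set i : T | gid i == gid x].
Proof. by apply: def_pblock; [exact: Gs_triv|exact: grp_in|rewrite inE]. Qed.

Lemma Gs_part : partition Gs [set: T].
Proof.
apply/and3P; split; last 2 first.
- exact: Gs_triv.
- apply/imsetP => -[k _ e].
  have : (widen_ord (isT : 10 <= 20) k) \in [set i : T | gid i == k].
    by rewrite inE /gid /= modn_small.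
  by rewrite -e inE.
apply/eqP/setP => y; rewrite inE; apply/bigcupP.
by exists [set i : T | gid i == gid y]; [exact: grp_in|rewrite inE].
Qed.

Lemma Gs_card : #|Gs| = 10.
Proof.
rewrite card_imset ?card_ord // => k1 k2 e.
have : widen_ord (isT : 10 <= 20) k1 \in [set i : T | gid i == k2].
  by rewrite -e inE /gid /= modn_small.
by rewrite inE /gid /= modn_small // => /eqP h; apply: val_inj.
Qed.

Lemma chk_grp : all (fun k => all (fun y => (gid y == k) == ((y == mkT k) || (y == mkT (k+10)))) ord20 && (mkT k != mkT (k + 10))) (iota 0 10).
Proof. vm_compute. reflexivity. Qed.

Lemma Gs_size g : g \in Gs -> #|g| = 2.
Proof.
move=> /imsetP[k _ ->].
have kin : val k \in iota 0 10 by rewrite mem_iota ltn_ord.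
move/allP: chk_grp => /(_ k kin) /andP[h1 h2].
have -> : [set i : T | gid i == k] = [set mkT k; mkT (k + 10)].
  apply/setP => y; rewrite !inE.
  by move/eqP: (forall20 h1 y).
by rewrite cards2 h2.
Qed.

Lemma As_blocks B : B \in As -> #|B| = 4 /\ forall g, g \in Gs -> #|B :&: g| <= 1.
Proof.
rewrite inE => /mapP[b bin ->].
move/allP: chk_blocks_ok => /(_ b bin) /andP[/andP[uq /eqP sz] /allP hk].
split; first by rewrite /mkset cardsE (card_uniqP uq).
move=> g /imsetP[k _ ->].
have -> : mkset b :&: [set i : T | gid i == k] = mkset [seq i <- b | gid i == k].
  by apply/setP => y; rewrite !inE mem_filter andbC.
rewrite /mkset cardsE; apply: leq_trans (card_size _) _.
by rewrite size_filter; apply: hk; rewrite mem_iota ltn_ord.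
Qed.

Lemma As_triples (S : {set T}) : #|S| = 3 -> (forall g, g \in Gs -> #|S :&: g| <= 1) ->
  exists! B, B \in As /\ S \subset B.
Proof.
move=> hS hG.
have hs : size (enum S) = 3 by rewrite -cardE.
have memS y : (y \in S) = (y \in enum S) by rewrite mem_enum.
have uq : uniq (enum S) := enum_uniq _.
case: (enum S) hs memS uq => [|a [|b [|c [|? ?]]]] // _ memS uq.
have dg u v : u \in S -> v \in S -> u != v -> gid u != gid v.
  move=> uS vS uv; apply/negP => /eqP e.
  have := hG _ (grp_in u); rewrite leqNgt => /negP; apply.
  by apply: (two_in uv); rewrite !inE ?uS ?vS ?e eqxx.
have aS : a \in S by rewrite memS !inE eqxx.
have bS : b \in S by rewrite memS !inE eqxx orbT.
have cS : c \in S by rewrite memS !inE eqxx !orbT.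
move: uq; rewrite /= !inE negb_or => /andP[/andP[ab ac] /andP[bc _]].
have := forall20 (forall20 (forall20 chk_triples_ok a) b) c.
rewrite (dg a b) // (dg a c) // (dg b c) // => /implyP /(_ isT) /eqP cnt.
have : has (fun bl => [&& a \in bl, b \in bl & c \in bl]) blocks by rewrite has_count cnt.
case/hasP => bl blin habc; exists (mkset bl); split.
  split; first by rewrite inE; apply: map_f.
  apply/subsetP => y; rewrite memS !inE; case/and3P: habc => ha hb hc.
  by case/or3P => /eqP ->.
move=> B' [] /[swap] /subsetP sub; rewrite inE => /mapP[bl' bl'in e]; subst B'.
congr mkset; apply: (count1_uniq cnt blin habc bl'in).
by rewrite -!in_mkset !sub.
Qed.

Lemma Gs_GDD : GDD_3_4 2 10 Gs As.
Proof.
split; first by rewrite card_ord.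
split; first exact: Gs_part.
split; first exact: Gs_card.
split; first exact: Gs_size.
split; first exact: As_blocks.
exact: As_triples.
Qed.

Definition mkC (c : seq (seq T)) : {set {set T}} := [set Y in map mkset c].

Lemma mkset_filter x b : mkset [seq y <- b | predC1 x y] = mkset b :\ x.
Proof. by apply/setP => y; rewrite !inE mem_filter. Qed.

Lemma res_x x : resolvable (derived_points Gs x) (derived_blocks As x).
Proof.
have := forall20 chk_res_ok x.
move=> /andP[/andP[/andP[/allP h1 /allP h2] /allP h3] /allP h4].
exists [set C in map mkC (cls x)]; split.
  apply/and3P; split.
  - apply/eqP/setP => Y; apply/idP/idP.
      case/bigcupP => C; rewrite inE => /mapP[cc ccin ->].
      rewrite inE => /mapP[t tin ->].
      move: (h1 cc ccin) => /andP[_ /allP /(_ t tin) /hasP[b bin /andP[xb st]]].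
      apply/imsetP; exists (mkset b).
      rewrite in_set. rewrite in_mkset xb andbT. rewrite /As in_set. apply: map_f. exact bin.
      rewrite -mkset_filter; apply/setP => y; rewrite !in_mkset.
      by rewrite (seteqP _ _ st).
    case/imsetP => B. rewrite in_set. rewrite /As in_set. move=> /andP[/mapP[b bin ->] xb] ->.
    rewrite in_mkset in xb.
    move: (h2 b bin); rewrite xb => /hasP[t /flattenP[cc ccin tin] st].
    apply/bigcupP; exists (mkC cc); first by rewrite inE map_f.
    rewrite inE -mkset_filter; apply/mapP; exists t => //.
    apply/setP => y; rewrite !in_mkset; by rewrite (seteqP _ _ st).
  - apply/trivIsetP => C1 C2; rewrite !in_set => /mapP[c1 c1in ->] /mapP[c2 c2in ->] neq.
    rewrite -setI_eq0; apply/eqP/setP => Y; rewrite !inE.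
    apply/negbTE/negP => /andP[/mapP[t1 t1in e1] /mapP[t2 t2in e2]].
    have : seteq t1 t2 by apply/seteqP; apply: mkset_eq; rewrite -e1 -e2.
    move: (h3 c1 c1in) => /allP /(_ c2 c2in) /allP /(_ t1 t1in) /allP /(_ t2 t2in) /implyP H /H /eqP ec.
    by rewrite ec eqxx in neq.
  - rewrite inE; apply/negP => /mapP[cc ccin e].
    move: (h1 cc ccin) => /andP[]; case: cc ccin e => [|t cc] // ccin e _ _.
    have : mkset t \in mkC (t :: cc) by rewrite inE map_f // inE eqxx.
    by rewrite -e inE.
move=> C; rewrite inE => /mapP[cc ccin ->].
move: (h4 cc ccin) => /andP[/allP h5 h6]; split.
  apply/trivIsetP => Y1 Y2; rewrite !inE => /mapP[t1 t1in ->] /mapP[t2 t2in ->] neq.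
  move: (h5 t1 t1in) => /allP /(_ t2 t2in) /orP[/eqP e|hd].
    by rewrite e eqxx in neq.
  rewrite -setI_eq0; apply/eqP/setP => y; rewrite !inE.
  apply/negbTE/negP => /andP[y1 y2]; move/negP: hd; apply.
  by apply/hasP; exists y.
apply/setP => y; rewrite /derived_points pblock_Gs !inE ?andbT.
move/eqP: (forall20 h6 y) => <-.
rewrite /cover; apply/idP/idP => H.
  case/bigcupP: H => Y; rewrite in_set => /mapP[t tin ->]; rewrite in_mkset => yt.
  by apply/hasP; exists t.
case/hasP: H => t tin yt.
by apply/bigcupP; exists (mkset t); rewrite ?in_set ?in_mkset ?map_f.
Qed.

Theorem lemma3p7 :
  exists G A : {set {set 'I_20}}, RDGDD_3_4 2 10 G A.
Proof.
exists Gs, As; split; first exact: Gs_GDD.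
exact: res_x.
Qed.
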